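(* For every $n\in\mathbb N$, $\theta_n(B_n)>c\sqrt n$ with $c=\dfrac{\sqrt[3]{\pi}}{\sqrt{12e}\cdot\sqrt[6]{3}}=0.2135\ldots$. Together with the upper bound $\theta_n(B_n)\le\sqrt{n+1}$, this gives $\theta_n(B_n)\asymp\sqrt n$.
   Context: $B_n$ is the closed unit Euclidean ball in $\mathbb R^n$. For nodes $x^{(1)},\dots,x^{(n+1)}\in B_n$ that are vertices of a nondegenerate simplex, the interpolation projector $P:C(B_n)\to\Pi_1(\mathbb R^n)$ maps $f$ to the unique polynomial $p$ of degree $\le1$ with $p(x^{(j)})=f(x^{(j)})$; $\|P\|_{B_n}$ is its operator norm with respect to the sup norm, and $\theta_n(B_n)$ is the minimum of $\|P\|_{B_n}$ over all such node sets. $L(n)\asymp M(n)$ means $c_1M(n)\le L(n)\le c_2M(n)$ for constants $c_1,c_2>0$ independent of $n$. *)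

(* Defs.v *)
From HB Require Import structures.
From mathcomp Require Import all_boot all_order all_algebra.
From mathcomp Require Import all_classical all_reals all_analysis.
Set Implicit Arguments. Unset Strict Implicit. Unset Printing Implicit Defensive.
Import Order.TTheory GRing.Theory Num.Theory.
Import numFieldNormedType.Exports.
Local Open Scope classical_set_scope.
Local Open Scope ring_scope.

Section Defs.
Variables (R : realType) (n : nat).

Definition dotp (a x : 'rV[R]_n) : R := \sum_(i < n) a ord0 i * x ord0 i.

Definition unit_ball : set 'rV[R]_n := [set x | dotp x x <= 1].

(* nodes x^(1..n+1) are vertices of a nondegenerate simplex:
   the (n+1)x(n+1) matrix with rows (1, x^(j)) is invertible *)
Definition nondeg_simplex (x : 'I_n.+1 -> 'rV[R]_n) : Prop :=
  \det (\matrix_(j < n.+1, k < n.+1)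
          (match @fintype.split 1 n k with
           | inl _ => 1
           | inr k' => x j ord0 k'
           end)) != 0.

Definition affine (a : 'rV[R]_n) (b : R) (y : 'rV[R]_n) : R := dotp a y + b.

Definition interpolates (x : 'I_n.+1 -> 'rV[R]_n) (f : 'rV[R]_n -> R)
    (a : 'rV[R]_n) (b : R) : Prop :=
  forall j, affine a b (x j) = f (x j).

(* ||P||_{B_n} = sup { ||P f||_{C(B_n)} : f in C(B_n), ||f||_{C(B_n)} <= 1 },
   written as the sup of |(Pf)(y)| over y in B_n and such f. *)
Definition proj_norm (x : 'I_n.+1 -> 'rV[R]_n) : R :=
  sup [set t : R | exists (f : 'rV[R]_n -> R) (a : 'rV[R]_n) (b : R) (y : 'rV[R]_n),
         [/\ {within unit_ball, continuous f},
             (forall z, unit_ball z -> `|f z| <= 1),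
             interpolates x f a b,
             unit_ball y &
             t = `|affine a b y|]].

Definition theta : R :=
  inf [set t : R | exists x : 'I_n.+1 -> 'rV[R]_n,
         [/\ forall j, unit_ball (x j), nondeg_simplex x & t = proj_norm x]].

End Defs.

Definition const_c (R : realType) : R :=
  pi `^ (3%:R^-1) / (Num.sqrt (12%:R * expR 1) * 3%:R `^ (6%:R^-1)).

(* Main.v *)
Require Import Defs.
From HB Require Import structures.
From mathcomp Require Import all_boot all_order all_algebra.
From mathcomp Require Import all_classical all_reals all_analysis.
From mathcomp Require Import ring lra.
Import Order.TTheory GRing.Theory Num.Theory.
Import numFieldNormedType.Exports.
Local Open Scope classical_set_scope.
Local Open Scope ring_scope.
Set Implicit Arguments. Unset Strict Implicit.

Section Dot.
Variables (R : realType) (n : nat).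
Implicit Types (a b x y : 'rV[R]_n).

Lemma dotpC a x : dotp a x = dotp x a.
Proof. by apply: eq_bigr => i _; rewrite mulrC. Qed.
Lemma dotpDl a b x : dotp (a + b) x = dotp a x + dotp b x.
Proof. by rewrite /dotp -big_split; apply: eq_bigr => i _; rewrite mxE mulrDl. Qed.
Lemma dotpZl (c : R) a x : dotp (c *: a) x = c * dotp a x.
Proof. by rewrite /dotp mulr_sumr; apply: eq_bigr => i _; rewrite mxE mulrA. Qed.
Lemma dotpNl a x : dotp (- a) x = - dotp a x.
Proof. by rewrite -scaleN1r dotpZl mulN1r. Qed.
Lemma dotp0l x : dotp 0 x = 0.
Proof. by rewrite /dotp big1 // => i _; rewrite mxE mul0r. Qed.
Lemma dotp_suml (I : finType) (F : I -> 'rV[R]_n) x :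
  dotp (\sum_i F i) x = \sum_i dotp (F i) x.
Proof.
rewrite /dotp exchange_big /=; apply: eq_bigr => i _.
by rewrite summxE mulr_suml.
Qed.
Lemma dotpDr a x y : dotp a (x + y) = dotp a x + dotp a y.
Proof. by rewrite dotpC dotpDl !(dotpC a). Qed.
Lemma dotpZr (c : R) a x : dotp a (c *: x) = c * dotp a x.
Proof. by rewrite dotpC dotpZl dotpC. Qed.
Lemma dotpNr a x : dotp a (- x) = - dotp a x.
Proof. by rewrite dotpC dotpNl dotpC. Qed.
Lemma dotp_ge0 a : 0 <= dotp a a.
Proof. by apply: sumr_ge0 => i _; apply: mulr_ge0_le0 || exact: sqr_ge0. Qed.
Lemma dotp_sumr (I : finType) (F : I -> 'rV[R]_n) x :
  dotp x (\sum_i F i) = \sum_i dotp x (F i).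
Proof. by rewrite dotpC dotp_suml; apply: eq_bigr => i _; rewrite dotpC. Qed.

Lemma coord_sq_le1 x i : dotp x x <= 1 -> `|x ord0 i| <= 1.
Proof.
move=> h; have : x ord0 i ^+ 2 <= 1.
  apply: le_trans h; rewrite /dotp (bigD1 i) //= -expr2 lerDl.
  by apply: sumr_ge0 => j _; rewrite -expr2 sqr_ge0.
rewrite ler_norml => h2; apply/andP; split; nra.
Qed.

Lemma dotp_expand a x (l : R) :
  dotp (a - l *: x) (a - l *: x) = dotp a a - 2 * l * dotp a x + l ^+ 2 * dotp x x.
Proof.
rewrite !dotpDl !dotpDr !dotpNl !dotpNr !dotpZl !dotpZr (dotpC x a); ring.
Qed.

Lemma cs_ball a y : dotp y y <= 1 -> dotp a y ^+ 2 <= dotp a a.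
Proof.
move=> hy; have := dotp_ge0 (a - dotp a y *: y); rewrite dotp_expand => h.
have h2 : 0 <= dotp a y ^+ 2 by exact: sqr_ge0.
have : dotp a y ^+ 2 * dotp y y <= dotp a y ^+ 2 by rewrite ler_piMr.
nra.
Qed.

Lemma signs m (a : 'I_m -> 'rV[R]_n) : exists s : 'I_m -> R,
  (forall j, s j = 1 \/ s j = -1) /\
  \sum_j dotp (a j) (a j) <= dotp (\sum_j s j *: a j) (\sum_j s j *: a j).
Proof.
elim: m a => [|m IH] a.
  by exists (fun _ => 1); split; [left|rewrite !big_ord0 dotp0l].
have [s' [hs' hW]] := IH (fun i => a (lift ord0 i)).
set W' := \sum_j s' j *: a (lift ord0 j) in hW.
pose sg : R := if 0 <= dotp (a ord0) W' then 1 else -1.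
exists (fun j => match unlift ord0 j with Some j' => s' j' | None => sg end).
split.
  move=> j; case: (unlift ord0 j) => [j'|]; first exact: hs'.
  by rewrite /sg; case: ifP; [left|right].
rewrite !big_ord_recl /= unlift_none.
have -> : \sum_(i < m) (match unlift ord0 (lift ord0 i) with Some j' => s' j' | None => sg end) *: a (lift ord0 i) = W' by apply: eq_bigr => i _; rewrite liftK.
rewrite dotpDl !dotpDr !dotpZl !dotpZr (dotpC W' (a ord0)).
have hsg : 0 <= sg * dotp (a ord0) W'.
  rewrite /sg; case: ifP => h; first by rewrite mul1r.
  by rewrite mulN1r oppr_ge0 ltW // ltNge h.
have hsq : sg * sg = 1 by rewrite /sg; case: ifP => _; rewrite ?mulr1 ?mulrNN ?mulr1.
rewrite mulrA hsq mul1r; lra.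
Qed.
End Dot.

Section Mat.
Variables (R : realType) (n : nat).

Definition ext (s : R) (z : 'I_n -> R) (k : 'I_n.+1) : R :=
  match @fintype.split 1 n k with inl _ => s | inr k' => z k' end.

Lemma ext0 s z : ext s z ord0 = s.
Proof. by rewrite /ext; case: splitP. Qed.

Lemma ext_lift s z i : ext s z (lift ord0 i) = z i.
Proof.
rewrite /ext; case: splitP => [j /= hj|k /= hk].
  by move: (ltn_ord j); rewrite -hj /bump leq0n.
by congr z; apply: val_inj; move: hk; rewrite /= /bump leq0n add1n => -[].
Qed.

Lemma ext_sum s z (g : 'I_n.+1 -> R) :
  \sum_k ext s z k * g k = s * g ord0 + \sum_i z i * g (lift ord0 i).
Proof.
by rewrite big_ord_recl ext0; congr (_ + _); apply: eq_bigr => i _; rewrite ext_lift.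
Qed.

Definition Mx (x : 'I_n.+1 -> 'rV[R]_n) : 'M[R]_n.+1 :=
  \matrix_(j < n.+1, k < n.+1) ext 1 (fun k' => x j ord0 k') k.

Lemma nondegE x : nondeg_simplex x <-> \det (Mx x) != 0.
Proof. by []. Qed.

Lemma sum_ind (i : 'I_n) (c : R) : \sum_(k < n) (if i == k then c else 0) = c.
Proof.
rewrite (bigD1 i) //= eqxx big1 ?addr0 // => k /negbTE.
by rewrite eq_sym => ->.
Qed.

Lemma sum_const_n (c : R) : \sum_(k < n) c = n%:R * c.
Proof. by rewrite sumr_const card_ord mulr_natl. Qed.


Lemma bound_sum (u v : 'I_n.+1 -> R) (N : 'M[R]_n.+1) :
  (forall k, `|u k| <= 1) -> (forall j, `|v j| <= 1) ->
  `|\sum_k u k * \sum_j N k j * v j| <= \sum_k \sum_j `|N k j|.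
Proof.
move=> hu hv; apply: le_trans (ler_norm_sum _ _ _) _; apply: ler_sum => k _.
rewrite normrM -[X in _ <= X]mul1r; apply: ler_pM => //.
apply: le_trans (ler_norm_sum _ _ _) _; apply: ler_sum => j _.
by rewrite normrM -[X in _ <= X]mulr1; apply: ler_pM.
Qed.

Lemma ext_norm1 (z : 'I_n -> R) k : (forall i, `|z i| <= 1) -> `|ext 1 z k| <= 1.
Proof.
move=> hz; case: (unliftP ord0 k) => [i ->|->]; first by rewrite ext_lift.
by rewrite ext0 normr1.
Qed.

Lemma affine_ext (a y : 'rV[R]_n) b :
  affine a b y = \sum_k ext 1 (fun i => y ord0 i) k * ext b (fun i => a ord0 i) k.
Proof.
rewrite ext_sum ext0 mul1r addrC /affine /dotp; congr (_ + _).
by apply: eq_bigr => i _; rewrite ext_lift mulrC.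
Qed.

Lemma proj_bounded (x : 'I_n.+1 -> 'rV[R]_n) :
  nondeg_simplex x -> (forall j, unit_ball (x j)) ->
  exists B : R, forall f a b y,
    (forall z, unit_ball z -> `|f z| <= 1) -> interpolates x f a b ->
    unit_ball y -> `|affine a b y| <= B.
Proof.
move=> hnd hx; set N := invmx (Mx x).
have uM : Mx x \in unitmx by rewrite unitmxE unitfE.
exists (\sum_k \sum_j `|N k j|) => f a b y hf hint hy.
pose c : 'cV[R]_n.+1 := \col_k ext b (fun i => a ord0 i) k.
pose v : 'cV[R]_n.+1 := \col_j f (x j).
have hMc : Mx x *m c = v.
  apply/matrixP => j l; rewrite !mxE (ord1 l).
  rewrite -(hint j) affine_ext; apply: eq_bigr => k _; by rewrite !mxE.
have hc : c = N *m v by rewrite -hMc mulKmx.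
rewrite affine_ext.
have -> : \sum_k ext 1 (fun i => y ord0 i) k * ext b (fun i => a ord0 i) k =
   \sum_k ext 1 (fun i => y ord0 i) k * \sum_j N k j * f (x j).
  apply: eq_bigr => k _; congr (_ * _).
  have := congr1 (fun M : 'cV[R]_n.+1 => M k ord0) hc; rewrite /= !mxE => ->.
  by apply: eq_bigr => j _; rewrite mxE.
apply: bound_sum => [k|j]; last exact: hf.
by apply: ext_norm1 => i; apply: coord_sq_le1.
Qed.

End Mat.

Section Cont.
Variables (R : realType) (n : nat).

Lemma sum_cont (T : topologicalType) (I : Type) (s : seq I) (F : I -> T -> R) :
  (forall i, continuous (F i)) -> continuous (fun z => \sum_(i <- s) F i z).
Proof.
move=> hF; elim: s => [|i s IH].
  under eq_fun => z do rewrite big_nil. exact: cst_continuous.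
under eq_fun => z do rewrite big_cons.
by move=> z; apply: continuousD; [exact: hF|exact: IH].
Qed.

Lemma affine_cont (a : 'rV[R]_n) b : continuous (affine a b).
Proof.
move=> z; apply: continuousD; last exact: cst_continuous.
apply: sum_cont => i y; apply: continuousM; first exact: cst_continuous.
exact: coord_continuous.
Qed.

Lemma clamp_cont (g : 'rV[R]_n -> R) : continuous g ->
  continuous (fun z => Num.max (-1) (Num.min 1 (g z))).
Proof.
move=> hg.
have h1 : continuous ((fun _ : 'rV[R]_n => 1 : R) \min g).
  by apply: min_fun_continuous => //; exact: cst_continuous.
have : continuous ((fun _ : 'rV[R]_n => -1 : R) \max ((fun _ : 'rV[R]_n => 1 : R) \min g)).
  by apply: max_fun_continuous => //; exact: cst_continuous.
by [].
Qed.

Lemma proj_ge (x : 'I_n.+1 -> 'rV[R]_n) (f : 'rV[R]_n -> R) (a y : 'rV[R]_n) (b : R) :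
  nondeg_simplex x -> (forall j, unit_ball (x j)) ->
  {within @unit_ball R n, continuous f} ->
  (forall z, unit_ball z -> `|f z| <= 1) -> interpolates x f a b ->
  unit_ball y -> `|affine a b y| <= proj_norm x.
Proof.
move=> hnd hx hc hf hint hy; have [B hB] := @proj_bounded R n x hnd hx.
rewrite /proj_norm; set S := [set t | _].
have hS : has_ubound S.
  exists B => t /= [f' [a' [b' [y' [_ hf' hi' hy' ->]]]]].
  exact: (hB f' a' b' y' hf' hi' hy').
have h := ub_le_sup hS; apply: h; by exists f, a, b, y; split.
Qed.

Lemma proj_le (x : 'I_n.+1 -> 'rV[R]_n) (K : R) :
  (forall (f : 'rV[R]_n -> R) (a y : 'rV[R]_n) (b : R), (forall z, unit_ball z -> `|f z| <= 1) ->
     interpolates x f a b -> unit_ball y -> `|affine a b y| <= K) ->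
  proj_norm x <= K.
Proof.
move=> hK; apply: ge_sup.
  exists `|affine (0 : 'rV[R]_n) 0 0|, (fun _ => 0), 0, 0, 0; split => //.
  - by apply: continuous_subspaceT => z; exact: cst_continuous.
  - by move=> z _; rewrite normr0.
  - by move=> j; rewrite /affine dotp0l addr0.
  - by rewrite /unit_ball /= dotp0l ler01.
move=> t [f [a [b [y [_ hf hi hy ->]]]]]; exact: (hK f a y b hf hi hy).
Qed.

Lemma proj_ge0 (x : 'I_n.+1 -> 'rV[R]_n) :
  nondeg_simplex x -> (forall j, unit_ball (x j)) -> 0 <= proj_norm x.
Proof.
move=> hnd hx; apply: le_trans (@proj_ge x (fun _ => 0) 0 0 0 hnd hx _ _ _ _).
- exact: normr_ge0.
- by apply: continuous_subspaceT => z; exact: cst_continuous.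
- by move=> z _; rewrite normr0.
- by move=> j; rewrite /affine dotp0l addr0.
- by rewrite /unit_ball /= dotp0l ler01.
Qed.

Lemma lower_elem (x : 'I_n.+1 -> 'rV[R]_n) : (0 < n)%N ->
  nondeg_simplex x -> (forall j, unit_ball (x j)) ->
  Num.sqrt ((n.+1)%:R / 4) <= proj_norm x.
Proof.
move=> hn hnd hx.
set N := invmx (Mx x).
have uM : Mx x \in unitmx by rewrite unitmxE unitfE.
have hMN : Mx x *m N = 1%:M by rewrite mulmxV.
pose a j : 'rV[R]_n := \row_k N (lift ord0 k) j.
pose bb j := N ord0 j.
have hdel : forall i j, affine (a j) (bb j) (x i) = (i == j)%:R.
  move=> i j; rewrite affine_ext.
  have := congr1 (fun M : 'M[R]_n.+1 => M i j) hMN; rewrite !mxE => <-.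
  apply: eq_bigr => k _; rewrite mxE; congr (_ * _).
  case: (unliftP ord0 k) => [k' ->|->]; last by rewrite ext0.
  by rewrite ext_lift mxE.
have ha : forall j, 1 / 4 <= dotp (a j) (a j).
  move=> j.
  have [i hij] : exists i, i != j.
    exists (if j == ord0 then ord_max else ord0).
    case: (eqVneq j ord0) => [->|h]; first by rewrite -(inj_eq val_inj) /= -lt0n.
    by rewrite eq_sym.
  set d := x j - x i.
  have e1 := hdel j j; have e2 := hdel i j.
  rewrite /affine eqxx mulr1n in e1; rewrite /affine (negbTE hij) mulr0n in e2.
  have h1 : dotp (a j) d = 1 by rewrite /d dotpDr dotpNr; lra.
  have hd : dotp d d <= 4.
    have h0 := dotp_ge0 (x j + x i).
    have hj := hx j; have hi := hx i; rewrite /unit_ball /= in hj hi.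
    move: h0; rewrite /d !dotpDl !dotpDr !dotpNl !dotpNr (dotpC (x i) (x j)).
    lra.
  have := dotp_ge0 (a j - (1 / 4) *: d); rewrite dotp_expand h1 expr2.
  lra.
have [s [hs hW]] := @signs R n n.+1 a.
set W := \sum_j s j *: a j in hW.
pose B := \sum_j s j * bb j.
have hWW : (n.+1)%:R / 4 <= dotp W W.
  apply: le_trans hW; apply: le_trans (ler_sum _ (fun j _ => ha j)).
  rewrite sumr_const card_ord -mulr_natr; lra.
have haff : forall y, affine W B y = \sum_j s j * affine (a j) (bb j) y.
  move=> y; rewrite /affine /W dotp_suml /B -big_split; apply: eq_bigr => j _.
  by rewrite dotpZl mulrDr.
have hint_s : forall i, affine W B (x i) = s i.
  move=> i; rewrite haff (bigD1 i) //= hdel eqxx mulr1 big1 ?addr0 // => j hj.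
  by rewrite hdel eq_sym (negbTE hj) mulr0.
pose f z := Num.max (-1) (Num.min 1 (affine W B z)).
have hfc : {within @unit_ball R n, continuous f}.
  by apply: continuous_subspaceT; apply: clamp_cont; apply: affine_cont.
have hfb : forall z, unit_ball z -> `|f z| <= 1.
  move=> z _; rewrite /f ler_norml le_max lexx /= ge_max ge_min lexx /= andbT; lra.

have hfi : interpolates x f W B.
  move=> i; rewrite hint_s /f hint_s.
  have hm : (-1 : R) <= 1 by lra.
  have hm' : ((1:R) <= -1) = false by apply/negbTE; rewrite -ltNge; lra.
  case: (hs i) => ->; first by rewrite minxx maxEle hm.
  by rewrite minEle hm' maxxx.

set r := Num.sqrt (dotp W W).
have hW0 : 0 < dotp W W by apply: lt_le_trans hWW; apply: divr_gt0.
have hr0 : 0 < r by rewrite sqrtr_gt0.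
have hrr : r ^+ 2 = dotp W W by rewrite sqr_sqrtr // ltW.
have hrn : r != 0 by rewrite gt_eqF.
have hy1 : unit_ball (r^-1 *: W).
  rewrite /unit_ball /= dotpZl dotpZr -hrr mulrA -expr2 -exprMn mulVf // expr1n.
have hy2 : unit_ball ((- r^-1) *: W).
  rewrite /unit_ball /= dotpZl dotpZr -hrr mulrA mulrNN -expr2 -exprMn mulVf // expr1n.
have g1 := proj_ge hnd hx hfc hfb hfi hy1.
have g2 := proj_ge hnd hx hfc hfb hfi hy2.
have v1 : affine W B (r^-1 *: W) = r + B.
  by rewrite /affine dotpZr -hrr expr2 mulrA mulVf // mul1r.
have v2 : affine W B ((- r^-1) *: W) = - r + B.
  by rewrite /affine dotpZr -hrr expr2 mulrA mulNr mulVf // mulN1r.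
rewrite v1 in g1; rewrite v2 in g2.
have hsq : Num.sqrt ((n.+1)%:R / 4) <= r.
  rewrite /r ler_sqrt //; exact: ltW.
apply: le_trans hsq _.
have [hB|hB] := lerP 0 B.
  apply: le_trans g1; rewrite ger0_norm; lra.
apply: le_trans g2; rewrite ler0_norm; lra.
Qed.
End Cont.

Section Gen.
Variable R : realType.
Lemma gen_hq (N al ga be : R) : 0 < N -> al ^+ 2 = (N + 1) / N -> ga ^+ 2 = 1 / N ->
  N * be = - (al + ga) -> 2 * al * be + N * be ^+ 2 = - 1 / N.
Proof.
move=> hN h1 h2 h3; have hNn : N != 0 by rewrite gt_eqF.
have e1 : 2 * al * be + N * be ^+ 2 = be * (al - ga).
  rewrite expr2 mulrA h3; ring.
have e2 : al ^+ 2 - ga ^+ 2 = 1.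
  rewrite h1 h2; field; exact: hNn.
have e3 : be = - (al + ga) / N by rewrite -h3; field; exact: hNn.
rewrite e1 e3.
have -> : -1 / N = - (al ^+ 2 - ga ^+ 2) / N by rewrite e2.
ring.
Qed.
Lemma gen_key1 (N al ga be : R) : 0 < N -> al ^+ 2 = (N + 1) / N -> ga ^+ 2 = 1 / N ->
  N * be = - (al + ga) -> al ^+ 2 + 2 * al * be + N * be ^+ 2 = 1.
Proof.
move=> hN h1 h2 h3; have hNn : N != 0 by rewrite gt_eqF.
rewrite -addrA (gen_hq hN h1 h2 h3) h1; field; exact: hNn.
Qed.
Lemma gen_key0 (N al ga be : R) : 0 < N -> al ^+ 2 = (N + 1) / N -> ga ^+ 2 = 1 / N ->
  N * be = - (al + ga) -> ga ^+ 2 + 2 * al * be + N * be ^+ 2 = 0.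
Proof.
move=> hN h1 h2 h3; have hNn : N != 0 by rewrite gt_eqF.
rewrite -addrA (gen_hq hN h1 h2 h3) h2; field; exact: hNn.
Qed.
End Gen.

Section Consts.
Variables (R : realType) (n : nat).
Hypothesis hn : (0 < n)%N.

Lemma consts : exists al ga be : R,
  [/\ al ^+ 2 = (n%:R + 1) / n%:R, n%:R * ga ^+ 2 = 1,
      ga ^+ 2 + 2 * al * be + n%:R * be ^+ 2 = 0,
      al ^+ 2 + 2 * al * be + n%:R * be ^+ 2 = 1 &
      ga + al + n%:R * be = 0].
Proof.
set N : R := n%:R.
have hN : 0 < N by rewrite /N ltr0n.
have hNn : N != 0 by rewrite gt_eqF.
set sN := Num.sqrt N; set tN := Num.sqrt ((n.+1)%:R : R).
have hs2 : sN ^+ 2 = N by rewrite /sN sqr_sqrtr // ltW.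
have ht2 : tN ^+ 2 = N + 1 by rewrite /tN sqr_sqrtr // /N -natr1.
exists (tN / sN), (- sN^-1), (- (tN / sN + - sN^-1) / N).
have h1 : (tN / sN) ^+ 2 = (N + 1) / N by rewrite expr_div_n ht2 hs2.
have h2 : (- sN^-1) ^+ 2 = 1 / N by rewrite sqrrN exprVn hs2 div1r.
have h3 : N * (- (tN / sN + - sN^-1) / N) = - (tN / sN + - sN^-1).
  by rewrite mulrC divfK.
split => //.
- by rewrite h2 mulrC divfK.
- exact: gen_key0 hN h1 h2 h3.
- exact: gen_key1 hN h1 h2 h3.
- by rewrite h3 (addrC (- sN^-1)) subrr.
Qed.
End Consts.

Section Upper.
Variables (R : realType) (n : nat) (al ga be : R).
Hypothesis hn : (0 < n)%N.
Hypothesis hal2 : al ^+ 2 = (n%:R + 1) / n%:R.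
Hypothesis hga : n%:R * ga ^+ 2 = 1.
Hypothesis hk0 : ga ^+ 2 + 2 * al * be + n%:R * be ^+ 2 = 0.
Hypothesis hk1 : al ^+ 2 + 2 * al * be + n%:R * be ^+ 2 = 1.
Hypothesis hk2 : ga + al + n%:R * be = 0.

Definition xs (j : 'I_n.+1) : 'rV[R]_n :=
  \row_k ext ga (fun i => (if i == k then al else 0) + be) j.

Lemma dotp_xs (a : 'rV[R]_n) j :
  dotp a (xs j) = ext (ga * \sum_k a ord0 k)
     (fun i => al * a ord0 i + be * \sum_k a ord0 k) j.
Proof.
rewrite /dotp; under eq_bigr => k _ do rewrite mxE.
case: (unliftP ord0 j) => [i ->|->]; last first.
  rewrite ext0 mulr_sumr; apply: eq_bigr => k _; by rewrite ext0 mulrC.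
rewrite ext_lift; under eq_bigr => k _ do rewrite ext_lift mulrDr.
rewrite big_split mulr_sumr; congr (_ + _); last first.
  by apply: eq_bigr => k _; rewrite mulrC.
rewrite (bigD1 i) // eqxx big1 => [|k hk]; last by rewrite eq_sym (negbTE hk) mulr0.
rewrite [a ord0 i * al]mulrC; exact: addr0.
Qed.

Lemma sum_ext (s0 : R) z : \sum_(j < n.+1) ext s0 z j = s0 + \sum_i z i.
Proof. by rewrite big_ord_recl ext0; congr (_ + _); apply: eq_bigr => i _; rewrite ext_lift. Qed.

Lemma sum_ext2 (s0 : R) z :
  \sum_(j < n.+1) (ext s0 z j) ^+ 2 = s0 ^+ 2 + \sum_i (z i) ^+ 2.
Proof. by rewrite big_ord_recl ext0; congr (_ + _); apply: eq_bigr => i _; rewrite ext_lift. Qed.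

Lemma P2 (a : 'rV[R]_n) : \sum_j dotp a (xs j) = 0.
Proof.
under eq_bigr => j _ do rewrite dotp_xs.
rewrite sum_ext big_split -mulr_sumr sum_const_n.
set S := \sum_k a ord0 k.
transitivity (S * (ga + al + n%:R * be)); first by rewrite /=; ring.
by rewrite hk2 mulr0.
Qed.

Lemma P3 (a : 'rV[R]_n) : \sum_j (dotp a (xs j)) ^+ 2 = al ^+ 2 * dotp a a.
Proof.
under eq_bigr => j _ do rewrite dotp_xs.
rewrite sum_ext2.
set S := \sum_k a ord0 k.
have hexp : forall i, (al * a ord0 i + be * S) ^+ 2 =
   al ^+ 2 * (a ord0 i * a ord0 i) + (2 * al * be * S) * a ord0 i + be ^+ 2 * S ^+ 2.
  by move=> i; ring.
under eq_bigr => i _ do rewrite hexp.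
rewrite !big_split -!mulr_sumr sum_const_n -/S /dotp.
set D := \sum_i a ord0 i * a ord0 i.
transitivity (al ^+ 2 * D + S ^+ 2 * (ga ^+ 2 + 2 * al * be + n%:R * be ^+ 2)); first by rewrite /=; ring.
by rewrite hk0 mulr0 addr0.
Qed.


Lemma hNpos : 0 < (n%:R : R). Proof. by rewrite ltr0n. Qed.

Lemma P1 j : dotp (xs j) (xs j) = 1.
Proof.
rewrite dotp_xs; case: (unliftP ord0 j) => [i ->|->].
- have e : forall k, xs (lift ord0 i) ord0 k = (if i == k then al else 0) + be.
    by move=> k; rewrite mxE ext_lift.
  rewrite ext_lift; under eq_bigr => k _ do rewrite e.
  rewrite e eqxx big_split sum_ind sum_const_n /=.
  transitivity (al ^+ 2 + 2 * al * be + n%:R * be ^+ 2); [ring | exact: hk1].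
- have e : forall k, xs ord0 ord0 k = ga by move=> k; rewrite mxE ext0.
  rewrite ext0; under eq_bigr => k _ do rewrite e.
  rewrite sum_const_n.
  transitivity (n%:R * ga ^+ 2); [ring | exact: hga].
Qed.

Lemma xs_ball j : unit_ball (xs j).
Proof. by rewrite /unit_ball /= P1. Qed.

Lemma ND : nondeg_simplex xs.
Proof.
rewrite nondegE -det_tr; apply/negP => /det0P [v hv0 hv].
pose a : 'rV[R]_n := \row_i v ord0 (lift ord0 i).
pose b := v ord0 ord0.
have hz : forall j, dotp a (xs j) + b = 0.
  move=> j; have e := congr1 (fun M : 'rV[R]_n.+1 => M ord0 j) hv.
  rewrite /= mxE [RHS]mxE in e.
  change (affine a b (xs j) = 0); rewrite affine_ext.
  transitivity (\sum_k v ord0 k * (Mx xs)^T k j); last exact: e.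
  apply: eq_bigr => k _; rewrite !mxE mulrC; congr (_ * _).
  case: (unliftP ord0 k) => [k' ->|->]; last by rewrite ext0.
  by rewrite ext_lift mxE.
have hb : b = 0.
  have : \sum_j (dotp a (xs j) + b) = 0 by rewrite big1.
  rewrite big_split /= P2 add0r sumr_const card_ord -mulr_natl => /eqP.
  by rewrite mulf_eq0 pnatr_eq0 /= => /eqP.
have hd : forall j, dotp a (xs j) = 0 by move=> j; rewrite -(hz j) hb addr0.
have haa : dotp a a = 0.
  have := P3 a; rewrite big1 => [|j _]; last by rewrite hd expr0n.
  move/esym/eqP; rewrite mulf_eq0 => /orP [|/eqP //].
  rewrite hal2 mulf_eq0 invr_eq0 => /orP [] /eqP h; move: hNpos; lra.
have ha0 : forall i, a ord0 i = 0.
  move=> i.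
  have hsq : \sum_(k < n | predT k) a ord0 k ^+ 2 = 0.
    by rewrite -[RHS]haa; apply: eq_bigr => k _; rewrite expr2.
  have := @psumr_eq0P R _ predT (fun k => a ord0 k ^+ 2) (fun k _ => sqr_ge0 _) hsq i isT.
  by move/eqP; rewrite sqrf_eq0 => /eqP.
have : v = 0.
  apply/rowP => k; rewrite mxE.
  case: (unliftP ord0 k) => [k' ->|->]; last exact: hb.
  by have := ha0 k'; rewrite mxE.
by move=> vz; rewrite vz eqxx in hv0.
Qed.

Lemma upper : proj_norm xs <= Num.sqrt (n.+1)%:R.
Proof.
apply: proj_le => f a y b hf hint hy.
set u := dotp a y.
have hu : u ^+ 2 <= dotp a a := cs_ball a hy.
have hg : forall j, (dotp a (xs j) + b) ^+ 2 <= 1.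
  move=> j; have := hf _ (xs_ball j); rewrite -(hint j) /affine ler_norml => /andP [h1 h2].
  nra.
have hsum : \sum_j (dotp a (xs j) + b) ^+ 2 <= (n.+1)%:R.
  by apply: le_trans (ler_sum _ (fun j _ => hg j)) _; rewrite sumr_const card_ord.
have hexp : \sum_j (dotp a (xs j) + b) ^+ 2 = al ^+ 2 * dotp a a + (n.+1)%:R * b ^+ 2.
  have e : forall j, (dotp a (xs j) + b) ^+ 2 =
     (dotp a (xs j)) ^+ 2 + (2 * b) * dotp a (xs j) + b ^+ 2 by move=> j; ring.
  under eq_bigr => j _ do rewrite e.
  rewrite !big_split /= P3 -mulr_sumr P2 sumr_const card_ord mulr0 addr0 mulr_natl.
  by [].
rewrite hexp hal2 -natr1 in hsum.
rewrite /affine -/u -sqrtr_sqr ler_sqrt; last by rewrite ler0n.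
rewrite -natr1.
set N : R := n%:R; set A := dotp a a.
have hN := hNpos; rewrite -/N in hN.
have hA : A + N * b ^+ 2 <= N.
  have e : (N + 1) / N * A + (N + 1) * b ^+ 2 = (N + 1) / N * (A + N * b ^+ 2).
    by field; rewrite gt_eqF.
  rewrite e in hsum.
  have e2 : N + 1 = (N + 1) / N * N by field; rewrite gt_eqF.
  rewrite [X in _ <= X]e2 ler_pM2l in hsum => //.
  by apply: divr_gt0 => //; lra.
have h3 : N * (u + b) ^+ 2 <= (N + 1) * (u ^+ 2 + N * b ^+ 2).
  have : 0 <= (u - N * b) ^+ 2 := sqr_ge0 _.
  nra.
have h4 : (N + 1) * (u ^+ 2 + N * b ^+ 2) <= (N + 1) * N.
  rewrite ler_pM2l; last lra.
  have hu2 : u ^+ 2 <= A := hu. lra.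
have h5 : N * (u + b) ^+ 2 <= N * (N + 1) by rewrite mulrC in h4; lra.
by rewrite ler_pM2l in h5.
Qed.

End Upper.
Unset Implicit Arguments.
Local Close Scope classical_set_scope.

Lemma c_bound (R : realType) : 0 <= const_c R <= 1 / 2.
Proof.
rewrite /const_c.
set p3 := pi `^ 3%:R^-1; set q6 := (3%:R : R) `^ 6%:R^-1.
set s := Num.sqrt (12%:R * expR 1).
have hp0 : 0 <= p3 := powR_ge0 _ _.
have hp3 : p3 ^+ 3 = pi.
  rewrite -powR_mulrn // -powRrM mulVf ?pnatr_eq0 // powRr1 //; exact: pi_ge0.
have hpi : pi < 4 :> R by have := @pihalf_lt2 R; lra.
have hp2 : p3 < 2.
  rewrite ltNge; apply/negP => h.
  have : 2 ^+ 3 <= p3 ^+ 3 by rewrite lerXn2r // ?nnegrE //; lra.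
  rewrite hp3; lra.
have hq1 : 1 <= q6.
  have h13 : (1:R) <= 3%:R by rewrite ler1n.
  rewrite /q6 -[X in X <= _](powRr0 (3%:R : R)); apply: (ler_powR h13).
  by rewrite invr_ge0 ler0n.
have he : 2 <= expR 1 :> R by have := @expR_ge1Dx R 1; lra.
have hs : 4 <= s.
  have -> : 4 = Num.sqrt (4 ^+ 2 : R) by rewrite sqrtr_sqr ger0_norm.
  rewrite ler_sqrt; last by rewrite mulr_ge0 // expR_ge0.
  rewrite expr2; lra.
have hd : 4 <= s * q6 by rewrite -[4]mulr1; apply: ler_pM => //; lra.
have hd0 : 0 < s * q6 by lra.
apply/andP; split; first by rewrite divr_ge0 // ltW.
rewrite ler_pdivrMr // mulrC.
have : 1 / 2 * 4 <= 1 / 2 * (s * q6) by rewrite ler_pM2l //; lra.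
lra.
Qed.

Theorem theorem11p4 (R : realType) (n : nat) (hn : (0 < n)%N) :
  const_c R * Num.sqrt (n%:R) < theta R n /\ theta R n <= Num.sqrt (n.+1%:R).
Proof.
have [al [ga [be [h1 h2 h3 h4 h5]]]] := @consts R n hn.
set X := @xs R n al ga be.
have hXnd : nondeg_simplex X := ND hn h1 h3 h5.
have hXb : forall j, unit_ball (X j) := xs_ball h2 h4.
have hXu : proj_norm X <= Num.sqrt (n.+1%:R) := upper hn h1 h2 h3 h4 h5.
rewrite /theta; set S := (Y in inf Y).
have hS : S (proj_norm X) by exists X; split.
have hSlb : has_lbound S.
  exists 0 => t [x [hb hnd ->]]; exact: proj_ge0.
split; last first.
  apply: le_trans hXu; exact: (ge_inf hSlb hS).
apply: lt_le_trans (lb_le_inf _ _); last first.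
- by move=> t [x [hb hnd ->]]; exact: lower_elem.
- by exists (proj_norm X).
have [hc0 hc1] := andP (c_bound R).
set c := const_c R in hc0 hc1 *.
have hn0 : 0 <= n%:R :> R by rewrite ler0n.
set z := c * Num.sqrt n%:R.
have hz0 : 0 <= z by rewrite mulr_ge0 // sqrtr_ge0.
have hz2 : z ^+ 2 <= n%:R / 4.
  rewrite /z exprMn sqr_sqrtr //.
  have h : c ^+ 2 <= 1 / 4 by rewrite expr2; have := ler_pM hc0 hc0 hc1 hc1; lra.
  have := ler_wpM2r hn0 h; lra.
rewrite -(ger0_norm hz0) -sqrtr_sqr ltr_sqrt; last by rewrite divr_gt0 // ltr0n.
apply: le_lt_trans hz2 _; by rewrite ltr_pM2r ?invr_gt0 // ltr_nat.
Qed.
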